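(* Let $G$ be a $4$-regular graph on $n\ge 7$ vertices and let $G'$ be the labeled complete graph on $V(G)$ whose $+$ edges are exactly the edges of $G$. Let $H$ be the labeled complete graph obtained from $G'$ by adding, for every $3$-set $\{u,v,w\}\subseteq V(G')$, a new set $C_{uvw}$ of $7$ vertices, where all edges within $C_{uvw}$ are $+$, all edges from $C_{uvw}$ to $u,v,w$ are $+$, and all other edges incident to $C_{uvw}$ are $-$. Assign tolerance $t_u=7\left(\binom{n-1}{2}-1\right)+2$ to each $u\in V(G')$ and $t_v=3$ to each $v\in V(H)\setminus V(G')$. Then $H$ has a clustering in which every vertex $v$ has at most $t_v$ incident errors if and only if $V(G)$ can be partitioned into sets each of which induces a triangle in $G$.
   Context: A clustering is a partition of the vertex set. An error at a vertex $v$ is an incident edge that is a $+$ edge between different clusters or a $-$ edge within a cluster. *)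

(* Defs.v *)
From mathcomp Require Import all_boot.
Set Implicit Arguments. Unset Strict Implicit. Unset Printing Implicit Defensive.

Definition triple (T : finType) := {S : {set T} | #|S| == 3}.

(* Vertex set of H: original vertices, plus vertices (S, i), i < 7,
   forming the 7-set C_S for each 3-set S. *)
Definition HV (T : finType) := (T + (triple T * 'I_7))%type.

(* Sign of the edge xy in H (true = "+", false = "-"); only used for x != y. *)
Definition hplus (T : finType) (e : rel T) (x y : HV T) : bool :=
  match x, y with
  | inl u, inl v => e u v
  | inl u, inr (A, _) => u \in val A
  | inr (A, _), inl u => u \in val A
  | inr (A, _), inr (B, _) => A == B
  end.

Definition errors (V : finType) (plus : V -> V -> bool) (P : {set {set V}}) (v : V) : nat :=
  #|[set u | (u != v) &&
      (if plus u v then pblock P u != pblock P v else pblock P u == pblock P v)]|.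

Definition tolerant_clustering (V : finType) (plus : V -> V -> bool) (t : V -> nat) :=
  exists P : {set {set V}}, partition P [set: V] /\ forall v, errors plus P v <= t v.

Definition tol (T : finType) (v : HV T) : nat :=
  match v with
  | inl _ => 7 * ('C(#|T|.-1, 2) - 1) + 2
  | inr _ => 3
  end.

Definition triangle_partition (T : finType) (e : rel T) :=
  exists P : {set {set T}}, partition P [set: T] /\
    forall B, B \in P -> #|B| = 3 /\ {in B &, forall x y, x != y -> e x y}.

(* Main.v *)
Require Import Defs.
From mathcomp Require Import all_boot.
From mathcomp Require Import zify.
Set Implicit Arguments. Unset Strict Implicit. Unset Printing Implicit Defensive.

Lemma card_triples_at (T : finType) (u : T) :
  #|[set A : triple T | u \in val A]| = 'C(#|T|.-1, 2).
Proof.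
have -> : #|[set A : triple T | u \in val A]| =
          #|[set S : {set T} | (#|S| == 3) && (u \in S)]|.
  rewrite -(card_imset _ val_inj); apply: eq_card => S; rewrite inE.
  apply/imsetP/andP.
  - by case=> A; rewrite inE => uA ->; split => //; exact: (valP A).
  - by case=> cS uS; exists (Sub S cS : triple T); rewrite ?inE /= ?SubK.
have -> : [set S : {set T} | (#|S| == 3) && (u \in S)] =
   (fun B => u |: B) @: [set B : {set T} | B \subset [set~ u] & #|B| == 2].
  apply/setP => S; rewrite inE; apply/andP/imsetP.
  - case=> /eqP cS uS; exists (S :\ u); last by rewrite setD1K.
    rewrite inE; apply/andP; split.
      by apply/subsetP => x; rewrite !inE => /andP[].
    by move: cS; rewrite (cardsD1 u S) uS add1n => -[->].
  - case=> B; rewrite inE => /andP[sB cB] ->; split; last by rewrite setU11.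
    have uB : u \notin B by apply/negP => /(subsetP sB); rewrite !inE eqxx.
    by rewrite cardsU1 uB (eqP cB).
rewrite card_in_imset ?cards_draws ?cardsC1 //.
move=> B1 B2; rewrite !inE => /andP[s1 _] /andP[s2 _] E.
have u1 : u \notin B1 by apply/negP => /(subsetP s1); rewrite !inE eqxx.
have u2 : u \notin B2 by apply/negP => /(subsetP s2); rewrite !inE eqxx.
by rewrite -(setU1K u1) -(setU1K u2) E.
Qed.

Lemma pblock_preim (V : finType) (X : eqType) (lab : V -> X) x y :
  (pblock (preim_partition lab [set: V]) x == pblock (preim_partition lab [set: V]) y)
  = (lab x == lab y).
Proof.
have eqi : {in [set: V] & &, equivalence_rel (fun x y => lab x == lab y)}.
  by split=> // /eqP->.
have [/eqP cP tiP _] := and3P (preim_partitionP lab [set: V]).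
rewrite eq_pblock // ?cP ?inE //.
by rewrite (pblock_equivalence_partition eqi) ?inE.
Qed.

Lemma backward (T : finType) (e : rel T) (e_sym : symmetric e)
  (e_reg : forall v : T, #|[set u | e v u]| = 4) :
  triangle_partition e -> tolerant_clustering (hplus e) (@tol T).
Proof.
case=> Q [pQ hQ].
have [/eqP cQ tiQ _] := and3P pQ.
have memB v : v \in pblock Q v by rewrite mem_pblock cQ inE.
have inQ v : pblock Q v \in Q by rewrite pblock_mem // cQ inE.
have defB B v : B \in Q -> v \in B -> pblock Q v = B by move=> ? ?; apply: def_pblock.
pose lab (x : HV T) : ({set T} + triple T)%type :=
  match x with
  | inl u => inl (pblock Q u)
  | inr (A, _) => if val A \in Q then inl (val A) else inr A
  end.
exists (preim_partition lab [set: HV T]); split; first exact: preim_partitionP.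
set P := preim_partition lab [set: HV T].
move=> x; rewrite /errors.
case: x => [u | [A i]] /=.
- set B := pblock Q u.
  have [cB triB] := hQ B (inQ u).
  have uB : u \in B := memB u.
  have cB3 : #|B| == 3 by rewrite cB.
  pose Bt : triple T := Sub B cB3.
  pose S := [set A : triple T | u \in val A] :\ Bt.
  pose N := [set v | e u v].
  have sub : [set w | (w != inl u) && (if hplus e w (inl u) then pblock P w != pblock P (inl u)
                                      else pblock P w == pblock P (inl u))]
     \subset inl @: (N :\: B) :|: inr @: setX S [set: 'I_7].
    apply/subsetP => -[v | [A i]]; rewrite !inE /= !pblock_preim /=.
    + move=> /andP[vu H]; apply/orP; left; rewrite mem_imset; last by move=> ? ? [].
      have vnu : v != u by apply: contraNneq vu => ->.
      rewrite !inE; case evu: (e v u) H => H.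
      * rewrite e_sym evu andbT; apply: contra H => vB; apply/eqP; congr inl.
        exact: defB (inQ u) vB.
      * exfalso; move: H => /eqP [] eB; have vB : v \in B by rewrite /B -eB memB.
        by move: (triB v u vB (memB u) vnu); rewrite evu.
    + move=> H; apply/orP; right; rewrite mem_imset; last by move=> ? ? [].
      apply/setXP; split => //; rewrite !inE.
      case uA: (u \in val A) H => /= H.
      * rewrite andbT; apply: contra H => /eqP ->; by rewrite /= (inQ u) eqxx.
      * exfalso; move: H; case: ifP => // AQ /eqP [] eAB.
        by move: uA; rewrite eAB memB.
  apply: (leq_trans (subset_leq_card sub)).
  apply: (leq_trans (leq_card_setU _ _)).
  rewrite !card_imset; [|by move=> ? ? []|by move=> ? ? []].
  rewrite cardsX cardsT card_ord.
  have cS : #|S| = 'C(#|T|.-1, 2) - 1.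
    rewrite -(card_triples_at u) (cardsD1 Bt [set A : triple T | u \in val A]).
    by rewrite inE /= uB add1n subn1.
  have cD : 2 <= #|N :&: B|.
    have <- : #|B :\ u| = 2 by move: cB; rewrite (cardsD1 u B) uB add1n => -[].
    apply: subset_leq_card; apply/subsetP => v; rewrite !inE => /andP[vu vB].
    by rewrite vB andbT; apply: triB uB vB _; rewrite eq_sym.
  rewrite cardsD e_reg cS.
  move: cD; set k := #|N :&: B|; set c := 'C(_, _); lia.
- have sub : [set w | (w != inr (A, i)) && (if hplus e w (inr (A, i)) then pblock P w != pblock P (inr (A, i))
                                      else pblock P w == pblock P (inr (A, i)))]
     \subset inl @: val A.
    apply/subsetP => -[v | [A' j]]; rewrite !inE /= !pblock_preim /=.
    + move=> H; rewrite mem_imset; last by move=> ? ? [].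
      case vA: (v \in val A) H => //=; case: ifP => // AQ /eqP [] eA.
      by rewrite -eA memB in vA.
    + case: eqP => [-> | nA] /=.
      * by [].
      * case: eqP => [-> | nA']; first by rewrite eqxx.
        case: ifP; case: ifP => //.
        -- by move=> _ _ /eqP [] /val_inj.
        -- by move=> _ _ /eqP [].
  apply: (leq_trans (subset_leq_card sub)).
  by rewrite card_imset ?(eqP (valP A)) //; move=> ? ? [].
Qed.

Lemma forward (T : finType) (e : rel T) (e_sym : symmetric e) (e_irr : irreflexive e)
  (e_reg : forall v : T, #|[set u | e v u]| = 4) (hn : 3 <= #|T|) :
  tolerant_clustering (hplus e) (@tol T) -> triangle_partition e.
Proof.
case=> P [_ hP].
pose f := pblock P.
pose E (v : HV T) := [set w | (w != v) && (if hplus e w v then f w != f v else f w == f v)].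
have hE v : #|E v| <= tol v by exact: hP.
have injA (A : triple T) : injective (fun j : 'I_7 => (inr (A, j) : HV T)) by move=> ? ? [].
have coh (A : triple T) i j : f (inr (A, i)) = f (inr (A, j)).
  pose D k := [set j : 'I_7 | f (inr (A, j)) != f (inr (A, k))].
  have Dle k : #|D k| <= 3.
    apply: leq_trans (hE (inr (A, k))).
    rewrite -(card_imset _ (injA A)); apply: subset_leq_card.
    apply/subsetP => w /imsetP [l]; rewrite inE => H ->.
    rewrite inE /= eqxx H andbT; apply: contraNneq H => -[->]; by rewrite eqxx.
  apply/eqP; apply/negPn/negP => H.
  have : #|[set: 'I_7]| <= #|D i :|: D j|.
    apply: subset_leq_card; apply/subsetP => k _; rewrite !inE.
    case: eqP => [Ek|] //=; by rewrite Ek.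
  have := (leq_card_setU (D i) (D j)).1; rewrite cardsT card_ord.
  move: (Dle i) (Dle j) => /=; lia.
pose g (A : triple T) := f (inr (A, ord0)).
have sep (A : triple T) (A' : triple T) : A != A' -> g A != g A'.
  move=> nA; apply/negP => /eqP gA.
  have : #|[set: 'I_7]| <= #|E (inr (A, ord0))|.
    rewrite -(card_imset _ (injA A')); apply: subset_leq_card.
    apply/subsetP => w /imsetP [j _ ->]; rewrite inE /=.
    have nA' : (A' == A) = false by rewrite eq_sym (negbTE nA).
    rewrite nA' (coh A' j ord0) -[f (inr (A', ord0))]/(g A') -gA /g eqxx andbT.
    by apply/eqP => -[eA _]; rewrite eA eqxx in nA'.
  have := hE (inr (A, ord0)); rewrite /= => h1 h2; move: (leq_trans h2 h1); by rewrite cardsT card_ord.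
have N1 : 0 < 'C(#|T|.-1, 2) by rewrite bin_gt0; lia.
have SAinj : injective (fun p : triple T * 'I_7 => (inr p : HV T)) by move=> ? ? [].
have exA u : exists A : triple T, (u \in val A) && (g A == f (inl u)).
  case: (pickP (fun A : triple T => (u \in val A) && (g A == f (inl u)))) => [A HA | none].
    by exists A.
  exfalso.
  have : #|setX [set A : triple T | u \in val A] [set: 'I_7]| <= #|E (inl u)|.
    rewrite -(card_imset _ SAinj); apply: subset_leq_card.
    apply/subsetP => w /imsetP [[A j]] /setXP []; rewrite inE => uA _ ->.
    rewrite inE /= uA (coh A j ord0) -[f (inr (A, ord0))]/(g A).
    by have := none A; rewrite uA /= => ->.
  rewrite cardsX card_triples_at => h2; move: (leq_trans h2 (hE (inl u))).
  rewrite cardsT card_ord /=; move: N1; set c := 'C(_, _); lia.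
have [Au hAu] := fin_all_exists exA.
have uAu u : u \in val (Au u) by case/andP: (hAu u).
have gAu u : g (Au u) = f (inl u) by case/andP: (hAu u) => _ /eqP.
have AuE u v : f (inl v) = f (inl u) -> Au v = Au u.
  move=> fv; case: (eqVneq (Au v) (Au u)) => // /sep.
  by rewrite !gAu fv eqxx.
have key u : {in val (Au u), forall v, (v != u -> e u v) /\ f (inl v) = f (inl u)}.
  set A := val (Au u).
  set M := [set v | e u v].
  set D := A :\ u.
  set Terr := [set v | inl v \in E (inl u)].
  have uA : u \in A := uAu u.
  have hT : #|Terr| <= 2.
    have : #|inr @: setX ([set B : triple T | u \in val B] :\ Au u) [set: 'I_7]
              :|: inl @: Terr| <= #|E (inl u)|.
      apply: subset_leq_card; apply/subsetP => w; rewrite inE.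
      case/orP => [/imsetP [[B j]] /setXP [] | /imsetP [v]]; rewrite ?inE.
      - move=> /andP [nB uB] _ ->; rewrite /= uB.
        rewrite (coh B j ord0) -[f (inr (B, ord0))]/(g B) -(gAu u).
        exact: (sep _ _ nB).
      - by move=> Hv ->.
    rewrite cardsU.
    have -> : inr @: setX ([set B : triple T | u \in val B] :\ Au u) [set: 'I_7]
              :&: inl @: Terr = set0.
      apply/setP => w; rewrite !inE; apply/negP => /andP [/imsetP [? _ ->] /imsetP [? _]] //.
    rewrite cards0 subn0 !card_imset; [|by move=> ? ? []|by move=> ? ? []].
    rewrite cardsX cardsT card_ord.
    have -> : #|[set B : triple T | u \in val B] :\ Au u| = 'C(#|T|.-1, 2) - 1.
      rewrite -(card_triples_at u) (cardsD1 (Au u) [set B : triple T | u \in val B]).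
      by rewrite inE uA add1n subn1.
    move=> h; move: (leq_trans h (hE (inl u))) => /=.
    move: N1; set c := 'C(_, _); lia.
  pose X := [set v in D | e u v && (f (inl v) != f (inl u))].
  have sub : (M :\: A) :|: X \subset Terr.
    apply/subsetP => v; rewrite !inE.
    case/orP => [/andP [vA evu] | /andP [/andP[vu vA] /andP [evu fv]]].
    - have vu : inl v != inl u :> HV T.
        by apply/eqP => -[vu]; rewrite vu uA in vA.
      rewrite vu /= e_sym evu; apply/negP => /eqP fv.
      by move: (uAu v); rewrite (AuE u v fv) -/A (negbTE vA).
    - have vu' : inl v != inl u :> HV T by apply/eqP => -[vu']; rewrite vu' eqxx in vu.
      by rewrite vu' /= e_sym evu.
  have disj : (M :\: A) :&: X = set0.
    apply/setP => v; rewrite !inE; apply/negP.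
    by case/andP => /andP [vA _] /andP [/andP [_ vA'] _]; rewrite vA' in vA.
  have := subset_leq_card sub; rewrite cardsU disj cards0 subn0 cardsD e_reg.
  have MAD : M :&: A \subset D.
    apply/subsetP => v; rewrite !inE => /andP [evu vA]; rewrite vA andbT.
    by apply/eqP => vu; rewrite vu e_irr in evu.
  have cD : #|D| = 2.
    by move: (valP (Au u)) => /eqP; rewrite -/A (cardsD1 u A) uA add1n => -[].
  have := subset_leq_card MAD; rewrite cD => h1 h2.
  have X0 : #|X| = 0 by move: (leq_trans h2 hT); lia.
  have MAeq : M :&: A = D.
    by apply/eqP; rewrite eqEcard MAD cD; move: (leq_trans h2 hT); lia.
  move=> v vA; case: (eqVneq v u) => [-> | vu]; first by split.
  have vD : v \in D by rewrite !inE vu vA.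
  have evu : e u v by move: vD; rewrite -MAeq !inE => /andP [].
  split => // ; apply/eqP; apply: contraT => fv.
  move/eqP: X0; rewrite cards_eq0 => /eqP X0.
  have : v \in X by rewrite inE vD evu fv.
  by rewrite X0 inE.
have AuE2 u v : v \in val (Au u) -> Au v = Au u.
  by move=> vA; apply: AuE; exact: (key u v vA).2.
pose Q := preim_partition Au [set: T].
have [/eqP cQ tiQ n0] := and3P (preim_partitionP Au [set: T]).
exists Q; split; first exact: preim_partitionP.
move=> B BQ.
have /set0Pn [x xB] : B != set0 by apply: contraNneq n0 => <-.
have eqi : {in [set: T] & &, equivalence_rel (fun x y => Au x == Au y)}.
  by split=> // /eqP->.
have Bx : B = pblock Q x by rewrite (def_pblock tiQ BQ xB).
have memB y : (y \in B) = (y \in val (Au x)).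
  rewrite Bx (pblock_equivalence_partition eqi) ?inE //.
  apply/eqP/idP => [-> | yA]; [exact: uAu | exact/esym/AuE2].
split; first by rewrite (eq_card memB) (eqP (valP (Au x))).
move=> y z; rewrite !memB => yA zA yz.
have zy : z \in val (Au y) by rewrite (AuE2 x y yA).
by apply: (key y z zy).1; rewrite eq_sym.
Qed.

Theorem corollary1 (T : finType) (e : rel T)
  (e_sym : symmetric e) (e_irr : irreflexive e)
  (e_reg : forall v : T, #|[set u | e v u]| = 4)
  (hn : 7 <= #|T|) :
  tolerant_clustering (hplus e) (@tol T) <-> triangle_partition e.
Proof.
split; first by apply: forward => //; lia.
exact: backward.
Qed.
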